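(* Let $(O,m_0)$ be an occurrence net with its initial marking $m_0$. For every marking $m$: $(\overleftarrow O,m_0)\to^*(\overleftarrow O,m)$ if and only if $(\overleftarrow O,m_0)\rightharpoonup^*(\overleftarrow O,m)$, where $\to^*$ denotes a finite sequence of forward and/or backward firings and $\rightharpoonup^*$ a finite sequence of forward firings only.
   Context: A net has places, transitions, and nonempty preset/postset sets ${}^\bullet\mathsf t,\mathsf t^\bullet$ for each transition; markings are multisets of places; firing rule: if ${}^\bullet\mathsf t=m$, $\mathsf t^\bullet=m'$ then $(N,m\oplus m'')\xrightarrow{\mathsf t}(N,m'\oplus m'')$. With $\prec=\{(a,\mathsf t)\mid a\in{}^\bullet\mathsf t\}\cup\{(\mathsf t,a)\mid a\in\mathsf t^\bullet\}$ and $\preceq$ its reflexive-transitive closure, an occurrence net is a marked net $(O,m_0)$ with $\prec$ acyclic, every reachable marking a set, $m_0=\{a\mid{}^\bullet a=\emptyset\}$, $|{}^\bullet a|\le1$ for all places ${}^\bullet a=\{\mathsf t\mid a\in\mathsf t^\bullet\}$, and no transition $\mathsf t$ with $\mathsf t\#\mathsf t$ (where $x\#y$ iff there are distinct-or-not transitions $\mathsf t_1\preceq x,\mathsf t_2\preceq y$ with $\mathsf t_1\neq\mathsf t_2$ and ${}^\bullet\mathsf t_1\cap{}^\bullet\mathsf t_2\ne\emptyset$). The reversible version $\overleftarrow O$ has the same places, transitions $T_O\cup\{\underline{\mathsf t}\mid\mathsf t\in T_O\}$, forward transitions keep their pre/postsets, and ${}^\bullet\underline{\mathsf t}=\mathsf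 t^\bullet$, $\underline{\mathsf t}^\bullet={}^\bullet\mathsf t$. Firings of forward transitions $\mathsf t\in T_O$ are forward firings ($\rightharpoonup$), of reverse transitions backward firings. *)

(* Defs.v *)
From Stdlib Require Import Relations Arith.

Section Nets.
Variables (P T : Type).

Inductive star {A : Type} (R : A -> A -> Prop) : A -> A -> Prop :=
| star_refl : forall x, star R x x
| star_step : forall x y z, R x y -> star R y z -> star R x z.

Definition fire {Tr : Type} (pre post : Tr -> P -> bool) (t : Tr) (m1 m2 : P -> nat) : Prop :=
  exists m'' : P -> nat,
    (forall a, m1 a = Nat.b2n (pre t a) + m'' a) /\
    (forall a, m2 a = Nat.b2n (post t a) + m'' a).

Definition step (pre post : T -> P -> bool) (m1 m2 : P -> nat) : Prop :=
  exists t, fire pre post t m1 m2.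

(* flow relation on places (inl) and transitions (inr) *)
Definition prec (pre post : T -> P -> bool) (x y : P + T) : Prop :=
  match x, y with
  | inl a, inr t => pre t a = true
  | inr t, inl a => post t a = true
  | _, _ => False
  end.

Definition preceq pre post := clos_refl_trans (P + T) (prec pre post).

Definition conflict (pre post : T -> P -> bool) (x y : P + T) : Prop :=
  exists t1 t2 : T, t1 <> t2 /\ preceq pre post (inr t1) x /\
    preceq pre post (inr t2) y /\ exists a, pre t1 a = true /\ pre t2 a = true.

Definition is_net (pre post : T -> P -> bool) : Prop :=
  (forall t, exists a, pre t a = true) /\ (forall t, exists a, post t a = true).

Definition occurrence_net (pre post : T -> P -> bool) (m0 : P -> nat) : Prop :=
  is_net pre post /\
  (forall x, ~ clos_trans (P + T) (prec pre post) x x) /\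
  (forall m, star (step pre post) m0 m -> forall a, m a <= 1) /\
  (* m0 = { a | preset of a empty } *)
  (forall a, (m0 a = 1 /\ forall t, post t a = false) \/
             (m0 a = 0 /\ exists t, post t a = true)) /\
  (forall a t1 t2, post t1 a = true -> post t2 a = true -> t1 = t2) /\
  (forall t, ~ conflict pre post (inr t) (inr t)).

(* reversible version: transitions inl t (forward) and inr t (reverse) *)
Definition rpre (pre post : T -> P -> bool) (u : T + T) : P -> bool :=
  match u with inl t => pre t | inr t => post t end.
Definition rpost (pre post : T -> P -> bool) (u : T + T) : P -> bool :=
  match u with inl t => post t | inr t => pre t end.

Definition rstep pre post (m1 m2 : P -> nat) : Prop :=
  exists u : T + T, fire (rpre pre post) (rpost pre post) u m1 m2.

Definition fstep pre post (m1 m2 : P -> nat) : Prop :=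
  exists t : T, fire (rpre pre post) (rpost pre post) (inl t) m1 m2.

End Nets.

Arguments fire {P Tr} pre post t m1 m2.
Arguments step {P T} pre post m1 m2.
Arguments prec {P T} pre post x y.
Arguments preceq {P T} pre post.
Arguments conflict {P T} pre post x y.
Arguments is_net {P T} pre post.
Arguments occurrence_net {P T} pre post m0.
Arguments rpre {P T} pre post u.
Arguments rpost {P T} pre post u.
Arguments rstep {P T} pre post m1 m2.
Arguments fstep {P T} pre post m1 m2.

(* Main.v *)
Require Import Defs.
From Stdlib Require Import Relations Arith Lia FunctionalExtensionality Classical.

Section S.
Variables (P T : Type) (pre post : T -> P -> bool) (m0 : P -> nat).

Inductive reach : (P -> nat) -> Prop :=
| reach0 : reach m0
| reachS : forall m1 m, reach m1 -> fstep pre post m1 m -> reach m.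

Lemma reach_star_aux : forall x m, star (fstep pre post) x m -> reach x -> reach m.
Proof. induction 1; intros; eauto using reach. Qed.

Lemma star_snoc : forall x y z, star (fstep pre post) x y -> fstep pre post y z ->
  star (fstep pre post) x z.
Proof. induction 1; intros; econstructor; eauto; constructor. Qed.

Lemma reach_star : forall m, reach m -> star (fstep pre post) m0 m.
Proof. induction 1. constructor. eapply star_snoc; eauto. Qed.

Hypothesis Huniq : forall a t1 t2, post t1 a = true -> post t2 a = true -> t1 = t2.
Hypothesis Hnet : forall t, exists a, post t a = true.
Hypothesis Hm0 : forall a, m0 a = 0 \/ forall t, post t a = false.

Lemma back : forall m, reach m -> forall m' t,
  fire (rpre pre post) (rpost pre post) (inr t) m m' -> reach m'.
Proof.
  induction 1; intros m' t [m'' [H1 H2]]; simpl in *.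
  - destruct (Hnet t) as [a Ha]. specialize (H1 a). rewrite Ha in H1.
    destruct (Hm0 a) as [E|E]. simpl in H1; lia. rewrite E in Ha; discriminate.
  - destruct H0 as [t1 [k [K1 K2]]]; simpl in *.
    destruct (classic (t = t1)) as [<-|Hne].
    + replace m' with m1; auto. extensionality a.
      specialize (H1 a); specialize (H2 a); specialize (K1 a); specialize (K2 a). lia.
    + set (c := fun a => k a - Nat.b2n (post t a)).
      assert (Hk : forall a, k a = Nat.b2n (post t a) + c a).
      { intro a; unfold c. specialize (H1 a); specialize (K2 a).
        destruct (post t a) eqn:E1; destruct (post t1 a) eqn:E2; simpl in *; try lia.
        exfalso; apply Hne; eauto. }
      apply reachS with (m1 := fun a => Nat.b2n (pre t a) + (Nat.b2n (pre t1 a) + c a)).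
      * apply (IHreach _ t). exists (fun a => Nat.b2n (pre t1 a) + c a); simpl; split; intro a;
        [specialize (K1 a); specialize (Hk a); lia | lia].
      * exists t1. exists (fun a => Nat.b2n (pre t a) + c a); simpl; split; intro a.
        lia. specialize (H1 a); specialize (H2 a); specialize (K2 a); specialize (Hk a); lia.
Qed.
End S.

Theorem mainTheorem11 (P T : Type) (pre post : T -> P -> bool) (m0 : P -> nat)
  (HO : occurrence_net pre post m0) :
  forall m : P -> nat,
    star (rstep pre post) m0 m <-> star (fstep pre post) m0 m.
Proof.
  destruct HO as [[_ Hnet] [_ [_ [Hm0 [Huniq _]]]]].
  assert (Hm0' : forall a, m0 a = 0 \/ forall t, post t a = false).
  { intro a; destruct (Hm0 a) as [[_ H]|[H _]]; auto. }
  assert (G : forall x m, star (rstep pre post) x m -> reach P T pre post m0 x ->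
              reach P T pre post m0 m).
  { induction 1 as [|x y z [[t|t] Hf] _ IH]; intros Hx; auto.
    - apply IH. eapply reachS; eauto. exists t; auto.
    - apply IH. eapply back; eauto. }
  intro m; split; intro H.
  - apply reach_star. eapply G; eauto. constructor.
  - clear -H. induction H. constructor. destruct H as [t Ht]. econstructor; [exists (inl t); exact Ht|]. exact IHstar.
Qed.
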